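(* Let $P$ be a Coxeter polytope with facet set $S$ and let $T_1,T_2\subset S$ be disjoint. If $T_1\cup T_2$ defines a face of $P$ and $T_1\subset T_2^\perp$, then each of $T_1\cup T_2^0$, $T_1\cup T_2^0\cup T_2^+$ and $T_1\cup T_2^0\cup T_2^-$ also defines a face of $P$.
   Context: A Cartan matrix on a finite set $S$: $A_{ss}=2$, $A_{st}\le0$ ($s\neq t$), $A_{st}=0\iff A_{ts}=0$, and $A_{st}A_{ts}\ge4$ or $=4\cos^2(\pi/k)$ for an integer $k\ge2$. A Coxeter polytope is a projective polytope $P\subset\mathbb{P}(V)$ with facet set $S$ and pairs $(\alpha_s,v_s)\in V^*\times V$ such that $A=A_P=(\alpha_s(v_t))_{s,t\in S}$ is a Cartan matrix and $\bigcap_s\{\alpha_s\le0\}$ is a cone lifting $P$. For $T\subset S$, $A_T=(A_{st})_{s,t\in T}$; the irreducible components of $T$ are the connected components of the graph on $T$ with edges $\{s,t\}$ where $A_{st}\neq0$. An irreducible Cartan matrix is of positive/zero/negative type according to the sign of its Perron–Frobenius eigenvalue (the simple real eigenvalue maximizing $|2-\mu|$ over eigenvalues $\mu$). $T^+$, $T^0$, $T^-$ denote the unions of the irreducible components of $T$ whose Cartan submatrices are of positive, zero, negative type respectively. $T^\perp=\{s\in S: A_{st}=0\ \text{for all } t\in T\}$. A subset $S'\subset S$ defines a face of $P$ if there exists $x\in V$ with $\alpha_s(x)=0$ for $s\in S'$ and $\alpha_s(x)<0$ for $s\notin S'$ (equivalently, $S'=S_f=\{s:f\subset\mathbb{P}(\ker\alpha_s)\}$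 for some face $f$, possibly empty or $\mathrm{Int}P$). *)

(* Defs.v *)
From HB Require Import structures.
From mathcomp Require Import all_boot all_order all_algebra.
From mathcomp Require Import boolp reals trigo.
From mathcomp.real_closed Require Import complex.
Set Implicit Arguments. Unset Strict Implicit. Unset Printing Implicit Defensive.
Import Order.TTheory GRing.Theory Num.Theory.
Local Open Scope ring_scope.

Section CoxeterDefs.
Variable R : realType.

(* V = R^n realized as row vectors 'rV[R]_n; V^* realized as row vectors too,
   with the duality pairing alpha(x) = \sum_i alpha_i x_i. *)
Definition pairing (n : nat) (a x : 'rV[R]_n) : R := \sum_(i < n) a 0 i * x 0 i.

Variable S : finType.

Definition is_cartan (A : S -> S -> R) : Prop :=
  (forall s, A s s = 2) /\
  (forall s t, s != t -> A s t <= 0) /\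
  (forall s t, A s t = 0 <-> A t s = 0) /\
  (forall s t, 4 <= A s t * A t s \/
     exists k : nat, (2 <= k)%N /\ A s t * A t s = 4 * (cos (pi / k%:R)) ^+ 2).

Variable n : nat.

Definition defines_face (alpha : S -> 'rV[R]_n) (T : {set S}) : Prop :=
  exists x : 'rV[R]_n, forall s,
    (s \in T -> pairing (alpha s) x = 0) /\ (s \notin T -> pairing (alpha s) x < 0).

Definition cartan_of (alpha v : S -> 'rV[R]_n) : S -> S -> R :=
  fun s t => pairing (alpha s) (v t).

(* (alpha_s, v_s)_{s in S} define a Coxeter polytope P in P(V) with facet set S:
   - A_P = (alpha_s(v_t)) is a Cartan matrix;
   - the cone {alpha_s <= 0 for all s} has nonempty interior;
   - it is sharp (contains no line), so that it lifts a properly convex polytope;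
   - each alpha_s cuts out a facet (codimension-one face), so the facets are
     exactly indexed by S. *)
Definition is_coxeter_polytope (alpha v : S -> 'rV[R]_n) : Prop :=
  [/\ is_cartan (cartan_of alpha v),
      defines_face alpha set0,
      (forall x : 'rV[R]_n, (forall s, pairing (alpha s) x = 0) -> x = 0)
    & forall s, defines_face alpha [set s]].

(* irreducible components of T: connected components of the graph on T with
   edges {s,t} such that A_st <> 0 *)
Definition cartan_rel (A : S -> S -> R) (T : {set S}) : rel S :=
  fun s t => [&& s \in T, t \in T & A s t != 0].

Definition component (A : S -> S -> R) (T : {set S}) (s : S) : {set S} :=
  [set t in T | connect (cartan_rel A T) s t].

Definition subA (A : S -> S -> R) (C : {set S}) : 'M[R]_#|C| :=
  \matrix_(i, j) A (enum_val i) (enum_val j).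

End CoxeterDefs.

Section Spectral.
Variable R : realType.

Definition eigenC (m : nat) (M : 'M[R]_m) (l : R[i]) : bool :=
  root (map_poly (fun x : R => Complex x 0) (char_poly M)) l.

Definition spectral_radius_is (m : nat) (M : 'M[R]_m) (r : R) : Prop :=
  (exists l, eigenC M l /\ `|l| = Complex r 0) /\
  (forall l, eigenC M l -> `|l| <= Complex r 0).

(* Perron-Frobenius eigenvalue mu of an irreducible Cartan matrix M: writing
   M = 2I - B with B >= 0 irreducible, mu = 2 - rho(B), the (simple, real)
   eigenvalue of M with maximal |2 - mu| corresponding to the Perron root of B. *)
Definition pf_eigenvalue_is (m : nat) (M : 'M[R]_m) (mu : R) : Prop :=
  spectral_radius_is (2%:M - M) (2 - mu).

Definition positive_type (m : nat) (M : 'M[R]_m) : Prop :=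
  exists mu, pf_eigenvalue_is M mu /\ 0 < mu.
Definition zero_type (m : nat) (M : 'M[R]_m) : Prop :=
  exists mu, pf_eigenvalue_is M mu /\ mu = 0.
Definition negative_type (m : nat) (M : 'M[R]_m) : Prop :=
  exists mu, pf_eigenvalue_is M mu /\ mu < 0.

Variable S : finType.

Definition pos_part (A : S -> S -> R) (T : {set S}) : {set S} :=
  [set s in T | `[< positive_type (subA A (component A T s)) >] ].
Definition zero_part (A : S -> S -> R) (T : {set S}) : {set S} :=
  [set s in T | `[< zero_type (subA A (component A T s)) >] ].
Definition neg_part (A : S -> S -> R) (T : {set S}) : {set S} :=
  [set s in T | `[< negative_type (subA A (component A T s)) >] ].

Definition perp (A : S -> S -> R) (T : {set S}) : {set S} :=
  [set s | [forall t in T, A s t == 0]].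

End Spectral.

(* Main.v *)
Require Import Defs.
From HB Require Import structures.
From mathcomp Require Import all_boot all_order all_algebra.
From mathcomp Require Import boolp reals trigo.
From mathcomp.real_closed Require Import complex.
From mathcomp Require Import lra.
Set Implicit Arguments. Unset Strict Implicit. Unset Printing Implicit Defensive.
Import Order.TTheory GRing.Theory Num.Theory.
Local Open Scope ring_scope.

Section Gordan.
Variable R : realFieldType.

Definition dotn (m : nat) (a c : nat -> R) := \sum_(k < m) a k * c k.

Lemma sum_delta (I : finType) (x : I) (F : I -> R) :
  \sum_i (x == i)%:R * F i = F x.
Proof.
rewrite (bigD1 x) //= eqxx mul1r big1 ?addr0 // => i /negbTE.
by rewrite eq_sym => ->; rewrite mul0r.
Qed.

Lemma sep_lemma (I : finType) (Pl Pu : pred I) (L U : I -> R) :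
  (forall p q, Pu p -> Pl q -> L q < U p) ->
  exists t, (forall q, Pl q -> L q < t) /\ (forall p, Pu p -> t < U p).
Proof.
move=> H.
have maxP : forall d : R, (forall q, Pl q -> L q <= \big[Num.max/d]_(q | Pl q) L q).
  by move=> d q hq; rewrite (bigD1 q) //= le_max lexx.
case: (pickP Pu) => [p0 hp0 | none].
- set mu := \big[Num.min/U p0]_(p | Pu p) U p.
  have muP : forall p, Pu p -> mu <= U p.
    by move=> p hp; rewrite /mu (bigD1 p) //= ge_min lexx.
  have Lmu : forall q, Pl q -> L q < mu.
    move=> q hq; rewrite /mu; apply: (big_ind (fun x => L q < x)).
    + exact: H.
    + by move=> x y hx hy; rewrite lt_min hx hy.
    + by move=> p hp; apply: H.
  set la := \big[Num.max/(mu - 1)]_(q | Pl q) L q.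
  have lamu : la < mu.
    rewrite /la; apply: (big_ind (fun x => x < mu)).
    + by rewrite gtrDl ltrN10.
    + by move=> x y hx hy; rewrite gt_max hx hy.
    + by move=> q hq; apply: Lmu.
  exists ((la + mu) / 2); split.
  + move=> q hq; apply: (le_lt_trans (maxP (mu - 1) q hq)).
    rewrite -/la ltr_pdivlMr //; lra.
  + move=> p hp; apply: (lt_le_trans _ (muP p hp)).
    by rewrite ltr_pdivrMr //; lra.
- exists (\big[Num.max/0]_(q | Pl q) L q + 1); split.
  + by move=> q hq; apply: (le_lt_trans (maxP 0 q hq)); lra.
  + by move=> p; rewrite none.
Qed.

Lemma gordan (m : nat) : forall (I : finType) (a : I -> nat -> R),
  (exists c : nat -> R, forall i, dotn m (a i) c < 0) \/
  (exists y : I -> R, (forall i, 0 <= y i) /\ (exists i, 0 < y i) /\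
      forall k, (k < m)%N -> \sum_i y i * a i k = 0).
Proof.
elim: m => [|m IH] I a.
  case: (pickP (@predT I)) => [i0 _ | none].
  - right; exists (fun _ => 1); split; first by move=> _; exact: ler01.
    by split; [exists i0; exact: ltr01 | by []].
  - by left; exists (fun _ => 0) => i; have := none i.
pose J := ({i : I | a i m == 0} + {pq : I * I | (0 < a pq.1 m) && (a pq.2 m < 0)})%type.
pose coef (j : J) (i : I) : R := match j with
  | inl i0 => (val i0 == i)%:R
  | inr pq => ((val pq).2 == i)%:R * a (val pq).1 m - ((val pq).1 == i)%:R * a (val pq).2 m
  end.
pose r (j : J) (k : nat) := \sum_i coef j i * a i k.
have F1 : forall j, r j m = 0.
  case=> [[i0 hi0]|[[p q] hpq]]; rewrite /r /=.
  + by rewrite sum_delta; apply/eqP.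
  + under eq_bigr do rewrite mulrBl -!mulrA.
    by rewrite sumrB !sum_delta mulrC subrr.
have F2 : forall j i, 0 <= coef j i.
  case=> [[i0 _]|[[p q] hpq]] i /=; first by rewrite ler0n.
  move/andP: hpq => /= [hp hq].
  rewrite subr_ge0; apply: (@le_trans _ _ 0).
  + by rewrite mulr_ge0_le0 ?ler0n // ltW.
  + by rewrite mulr_ge0 ?ler0n // ltW.
have F3 : forall j, exists i, 0 < coef j i.
  case=> [[i0 _]|[[p q] hpq]] /=.
  + by exists i0; rewrite eqxx ltr01.
  + move/andP: hpq => /= [hp hq].
    exists q; rewrite eqxx mul1r.
    have -> : (p == q) = false.
      by apply/negbTE/eqP => epq; move: hp; rewrite epq ltNge ltW.
    by rewrite mul0r subr0.
have F4 : forall j c, dotn m (r j) c = \sum_i coef j i * dotn m (a i) c.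
  move=> j c; rewrite /dotn /r.
  under eq_bigr do rewrite mulr_suml.
  rewrite exchange_big /=; apply: eq_bigr => i _.
  by rewrite mulr_sumr; apply: eq_bigr => k _; rewrite mulrA.
case: (IH J r) => [[c' hc']|[y' [y'ge [[j0 hj0] y'eq]]]].
- left.
  pose d i := dotn m (a i) c'.
  have hsep : forall p q, 0 < a p m -> a q m < 0 -> - d q / a q m < - d p / a p m.
    move=> p q hp hq.
    have := hc' (inr (exist _ (p, q) (introT andP (conj hp hq)))).
    rewrite F4 /= -/d.
    under eq_bigr do rewrite mulrBl -!mulrA.
    rewrite sumrB !sum_delta => h.
    rewrite ltr_ndivrMr // mulrAC ltr_pdivrMr //.
    move: h; set P := a p m; set Q := a q m; set dp := d p; set dq := d q => h.
    have h2 : P * dq - Q * dp < 0 by exact: h.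
    nra.
  have [t [ht1 ht2]] := @sep_lemma I (fun q => a q m < 0) (fun p => 0 < a p m)
     (fun q => - d q / a q m) (fun p => - d p / a p m) hsep.
  exists (fun k => if k == m then t else c' k) => i.
  rewrite /dotn big_ord_recr /= eqxx.
  have -> : \sum_(k < m) a i k * (if (k : nat) == m then t else c' k) = d i.
    by apply: eq_bigr => k _; rewrite ifN // neq_ltn ltn_ord.
  case: (ltgtP (a i m) 0) => him.
  + have := ht1 i him; rewrite ltr_ndivrMr // => h.
    by rewrite -subr_lt0 opprK in h; rewrite addrC mulrC; move: h; rewrite addrC.
  + have := ht2 i him; rewrite ltr_pdivlMr // => h.
    by rewrite -subr_lt0 opprK addrC in h; rewrite mulrC.
  + have := hc' (inl (exist _ i (introT eqP him))).
    by rewrite F4 /= sum_delta him mul0r addr0.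
- right.
  exists (fun i => \sum_j y' j * coef j i); split; last split.
  + by move=> i; apply: sumr_ge0 => j _; rewrite mulr_ge0.
  + have [i0 hi0] := F3 j0; exists i0.
    rewrite (bigD1 j0) //=; apply: (lt_le_trans (mulr_gt0 hj0 hi0)).
    by apply: ler_wpDr => //; apply: sumr_ge0 => j _; rewrite mulr_ge0.
  + move=> k hk.
    under eq_bigr do rewrite mulr_suml.
    rewrite exchange_big /=.
    have -> : \sum_j \sum_i y' j * coef j i * a i k = \sum_j y' j * r j k.
      by apply: eq_bigr => j _; rewrite /r mulr_sumr; apply: eq_bigr => i _; rewrite mulrA.
    move: hk; rewrite ltnS leq_eqVlt => /orP [/eqP -> | hk].
    * by apply: big1 => j _; rewrite F1 mulr0.
    * exact: y'eq.
Qed.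

End Gordan.

Section Spec.
Variable R : realType.

Lemma char_poly_tr (m : nat) (B : 'M[R]_m) : char_poly B^T = char_poly B.
Proof.
rewrite /char_poly -det_tr; congr (\det _); apply/matrixP => i j.
by rewrite !mxE; case: eqP => [->|]; rewrite ?eqxx // => /nesym/eqP/negbTE ->.
Qed.

Lemma map_realC (p : {poly R}) :
  map_poly (fun x : R => Complex x 0) p = map_poly (real_complex R) p.
Proof. by []. Qed.

Variable S : finType.

Lemma zero_type_of (A : S -> S -> R) (C : {set S}) (u : S -> R) :
  (forall s, A s s = 2) -> (forall s t, s != t -> A s t <= 0) ->
  (forall s, s \in C -> 0 < u s) -> forall s0, s0 \in C ->
  (forall t, t \in C -> \sum_(s in C) u s * A s t = 0) ->
  zero_type (subA A C).
Proof.
move=> hd hoff hu s0 hs0 hnull.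
set M := subA A C.
set B := 2%:M - M.
pose uu (j : 'I_#|C|) := u (enum_val j).
have Bij : forall i j, B i j = (i == j)%:R * 2 - A (enum_val i) (enum_val j).
  by move=> i j; rewrite !mxE mulr_natl.
have Bge0 : forall i j, 0 <= B i j.
  move=> i j; rewrite Bij; case: (eqVneq i j) => [->|hij].
    by rewrite hd mul1r subrr.
  rewrite mul0r sub0r oppr_ge0; apply: hoff.
  by apply: contra hij => /eqP /enum_val_inj ->.
have uupos : forall j, 0 < uu j by move=> j; apply: hu; exact: enum_valP.
have left2 : forall j, \sum_i uu i * B i j = 2 * uu j.
  move=> j.
  have h0 : \sum_i uu i * A (enum_val i) (enum_val j) = 0.
    by apply: etrans (hnull (enum_val j) (enum_valP j)); rewrite [RHS]big_enum_val.
  under eq_bigr do rewrite Bij mulrBr.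
  rewrite sumrB h0 subr0.
  rewrite (bigD1 j) //= eqxx big1 ?addr0; first by rewrite mul1r mulrC.
  by move=> i /negbTE; move=> ->; rewrite mul0r mulr0.
exists 0; split => //.
rewrite /pf_eigenvalue_is subr0 -/B.
split.
- exists (real_complex R 2); split.
  + rewrite /eigenC map_realC.
    rewrite /root horner_map /=.
    have : eigenvalue B 2.
      apply/eigenvalueP; exists (\row_j uu j).
        apply/rowP => j; rewrite !mxE -left2.
        by apply: eq_bigr => i _; rewrite mxE.
      apply/eqP => /rowP /(_ (enum_rank_in hs0 s0)); rewrite !mxE => h.
      by move: (uupos (enum_rank_in hs0 s0)); rewrite h ltxx.
    rewrite eigenvalue_root_char => /rootP ->.
    by [].
  + by rewrite ger0_norm // ler0c.
- move=> l; rewrite /eigenC map_realC -char_poly_tr map_char_poly.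
  rewrite -eigenvalue_root_char => /eigenvalueP [v hv vn0].
  set f := real_complex R.
  have hrow : forall i, \sum_j v 0 j * f (B i j) = l * v 0 i.
    move=> i; move/rowP: hv => /(_ i); rewrite !mxE => <-.
    by apply: eq_bigr => j _; rewrite !mxE.
  have f2 : f 2 = 2 by rewrite /f rmorph_nat.
  have fM : forall x y, f (x * y) = f x * f y by move=> x y; rewrite /f rmorphM.
  have fsum : forall (F : 'I_#|C| -> R), f (\sum_i F i) = \sum_i f (F i).
    by move=> F; rewrite /f rmorph_sum.
  have fge0 : forall x, 0 <= x -> 0 <= f x.
    by move=> x hx; rewrite lecE /= eqxx hx.
  have fgt0 : forall x, 0 < x -> 0 < f x.
    by move=> x hx; rewrite ltcE /= eqxx hx.
  pose U i := f (uu i).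
  pose V i := `|v 0 i|.
  have step1 : forall i, `|l| * V i <= \sum_j V j * f (B i j).
    move=> i; rewrite /V -normrM -hrow.
    apply: le_trans (ler_norm_sum _ _ _) _.
    apply: ler_sum => j _; rewrite normrM; apply: ler_wpM2l => //.
    by rewrite ger0_norm // fge0.
  set P := \sum_i U i * V i.
  have step2 : `|l| * P <= 2 * P.
    rewrite /P [X in X <= _]mulr_sumr.
    have h1 : \sum_i `|l| * (U i * V i) <= \sum_i U i * \sum_j V j * f (B i j).
      apply: ler_sum => i _; rewrite mulrCA; apply: ler_wpM2l; last exact: step1.
      by apply: fge0; apply: ltW.
    apply: le_trans h1 _.
    under eq_bigr do rewrite mulr_sumr.
    rewrite exchange_big /= mulr_sumr le_eqVlt; apply/orP; left; apply/eqP.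
    apply: eq_bigr => j _.
    have -> : \sum_i U i * (V j * f (B i j)) = V j * f (\sum_i uu i * B i j).
      rewrite fsum mulr_sumr; apply: eq_bigr => i _.
      by rewrite fM mulrCA.
    by rewrite left2 fM f2 /U mulrCA [V j * _]mulrC.
  have [j hj] : exists j, v 0 j != 0.
    case/boolP: [exists j, v 0 j != 0] => [/existsP //|/existsPn hn].
    case/eqP: vn0; apply/rowP => j; rewrite mxE.
    by move: (hn j); rewrite negbK => /eqP.
  have Ppos : 0 < P.
    rewrite /P (bigD1 j) //=; apply: ltr_wpDr.
      by apply: sumr_ge0 => i _; apply: mulr_ge0; [apply: fge0; apply: ltW | exact: normr_ge0].
    by apply: mulr_gt0; [apply: fgt0 | rewrite /V normr_gt0].
  have -> : (2 +i* 0)%C = f 2 by [].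
  by rewrite f2 -(ler_pM2r Ppos).
Qed.

Variable n : nat.

Lemma pairing_sumZ (a : 'rV[R]_n) (m : nat) (c : nat -> R) (w : nat -> 'rV[R]_n) :
  pairing a (\sum_(k < m) c k *: w k) = \sum_(k < m) c k * pairing a (w k).
Proof.
rewrite /pairing.
under eq_bigr do rewrite summxE mulr_sumr.
rewrite exchange_big /=; apply: eq_bigr => k _; rewrite mulr_sumr.
by apply: eq_bigr => i _; rewrite mxE mulrCA.
Qed.

Lemma pairing_lin (a : 'rV[R]_n) K x z :
  pairing a (K *: x + z) = K * pairing a x + pairing a z.
Proof.
rewrite /pairing mulr_sumr -big_split; apply: eq_bigr => i _.
by rewrite !mxE mulrDr mulrCA.
Qed.

Lemma face_perturb (alpha : S -> 'rV[R]_n) (T N : {set S}) x z :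
  (forall s, (s \in T -> pairing (alpha s) x = 0) /\ (s \notin T -> pairing (alpha s) x < 0)) ->
  N \subset T ->
  (forall s, s \in T -> s \notin N -> pairing (alpha s) z = 0) ->
  (forall s, s \in N -> pairing (alpha s) z < 0) ->
  defines_face alpha (T :\: N).
Proof.
move=> hx hNT hz0 hzN.
pose K := 1 + \sum_(s | s \notin T) `|pairing (alpha s) z| / (- pairing (alpha s) x).
exists (K *: x + z) => s; rewrite pairing_lin !inE.
have [hxT hxN] := hx s.
case hT: (s \in T); case hN: (s \in N) => /=.
- by split => // _; rewrite hxT // mulr0 add0r hzN.
- by split => // _; rewrite hxT // mulr0 add0r hz0 // hN.
- by move/subsetP: hNT => /(_ s hN); rewrite hT.
- split => // _.
  have hX : 0 < - pairing (alpha s) x by rewrite oppr_gt0 hxN // hT.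
  have hK : 1 + `|pairing (alpha s) z| / (- pairing (alpha s) x) <= K.
    rewrite /K lerD2l (bigD1 s) ?hT //= lerDl.
    by apply: sumr_ge0 => t /andP [ht _]; apply: divr_ge0 => //; rewrite oppr_ge0 ltW // (proj2 (hx t) ht).
    
  have hKX : - pairing (alpha s) x + `|pairing (alpha s) z| <= K * (- pairing (alpha s) x).
    apply: le_trans (ler_wpM2r (ltW hX) hK).
    by rewrite mulrDl mul1r divfK // gt_eqF.
  have hn := ler_norm (pairing (alpha s) z).
  move: hX hKX hn; rewrite mulrN.
  set X := pairing (alpha s) x; set Z := pairing (alpha s) z; set KX := K * X.
  move=> *; lra.
Qed.

Lemma rel_sym (A : S -> S -> R) (T : {set S}) :
  (forall s t, A s t = 0 <-> A t s = 0) -> symmetric (cartan_rel A T).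
Proof.
move=> h s t; rewrite /cartan_rel.
have e : (A s t == 0) = (A t s == 0) by apply/idP/idP => /eqP /h /eqP.
by rewrite e andbCA.
Qed.

Lemma comp_eq (A : S -> S -> R) (T : {set S}) s t :
  (forall s t, A s t = 0 <-> A t s = 0) ->
  connect (cartan_rel A T) s t -> component A T s = component A T t.
Proof.
move=> h hst; apply/setP => u; rewrite !inE.
by rewrite (same_connect (sym_connect_sym (rel_sym T h)) hst).
Qed.

Lemma main_gen (alpha v : S -> 'rV[R]_n) (T1 T2 G : {set S}) :
  is_coxeter_polytope alpha v -> [disjoint T1 & T2] -> defines_face alpha (T1 :|: T2) ->
  T1 \subset perp (cartan_of alpha v) T2 ->
  (forall s t, s \in T2 -> t \in T2 ->
     component (cartan_of alpha v) T2 s = component (cartan_of alpha v) T2 t ->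
     (s \in G) = (t \in G)) ->
  (forall s, s \in T2 -> s \notin G ->
     ~ zero_type (subA (cartan_of alpha v) (component (cartan_of alpha v) T2 s))) ->
  defines_face alpha (T1 :|: (T2 :&: G)).
Proof.
move=> [[hd [hoff [hsym _]]] _ _ _] hdis [x hx] hperp hG hZ.
set A := cartan_of alpha v.
set T := T1 :|: T2.
set N := T2 :\: G.
have eqset : T1 :|: (T2 :&: G) = T :\: N.
  apply/setP => s; rewrite !inE.
  case: (boolP (s \in T1)) => h1.
    by rewrite /= (disjointFr hdis h1) andbF.
  by case: (s \in T2); case: (s \in G).
rewrite eqset.
have hconn : forall s t, s \in T2 -> t \in T2 -> A s t != 0 ->
    component A T2 s = component A T2 t.
  move=> s t hs ht hst; apply: comp_eq => //; apply: connect1.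
  by rewrite /cartan_rel hs ht hst.
have hNz : forall s t, s \in T -> s \notin N -> t \in N -> A s t = 0.
  move=> s t hs hsN htN; move: htN; rewrite inE => /andP [htG htT2].
  case/setUP: hs => hs.
    by move/subsetP: hperp => /(_ s hs); rewrite inE => /forallP /(_ t) /implyP /(_ htT2) /eqP.
  apply/eqP; apply: contraNT hsN => hst.
  by rewrite inE hs andbT (hG s t hs htT2 (hconn s t hs htT2 hst)).
case: (set_0Vmem N) => [N0 | [sd hsd]].
  by rewrite N0 setD0; exists x.
have hts : forall k, (k < #|N|)%N -> nth sd (enum N) k \in N.
  by move=> k hk; rewrite -mem_enum mem_nth // -cardE.
pose a (i : 'I_#|N|) (k : nat) := A (enum_val i) (nth sd (enum N) k).
case: (gordan #|N| a) => [[c hc] | [y [yge [[i0 hi0] yeq]]]].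
- pose z := \sum_(k < #|N|) c k *: v (nth sd (enum N) k).
  have pz : forall s, pairing (alpha s) z = \sum_(k < #|N|) c k * A s (nth sd (enum N) k).
    by move=> s; rewrite /z (pairing_sumZ _ _ c (fun k => v (nth sd (enum N) k))).
  apply: (face_perturb (z := z) hx).
  + by apply/subsetP => s; rewrite !inE => /andP [_ ->]; rewrite orbT.
  + move=> s hs hsN; rewrite pz big1 // => k _.
    by rewrite (hNz s _ hs hsN) ?mulr0 //; apply: hts; exact: ltn_ord.
  + move=> s hsN; rewrite pz.
    have := hc (enum_rank_in hsd s); rewrite /dotn /a (enum_rankK_in hsd hsN).
    move=> h; rewrite (eq_bigr (fun k : 'I_#|N| => A s (nth sd (enum N) k) * c k)) // => k _; exact: mulrC.
- exfalso.
  set s0 := enum_val i0.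
  have hs0N : s0 \in N := enum_valP i0.
  have s0T2 : s0 \in T2 by move: hs0N; rewrite inE => /andP [].
  have s0G : s0 \notin G by move: hs0N; rewrite inE => /andP [].
  set C := component A T2 s0.
  pose w s := if s \in N then y (enum_rank_in hsd s) else 0.
  have wge : forall s, 0 <= w s by move=> s; rewrite /w; case: ifP.
  have ws0 : 0 < w s0 by rewrite /w hs0N /s0 enum_valK_in.
  have hnullN : forall t, t \in N -> \sum_(s in N) w s * A s t = 0.
    move=> t ht.
    have hk := yeq (enum_rank_in hsd t) (ltn_ord _).
    rewrite /a -(enum_val_nth sd) (enum_rankK_in hsd ht) in hk.
    rewrite big_enum_val /= -[RHS]hk; apply: eq_bigr => i _.
    by rewrite /w enum_valP enum_valK_in.
  have hC : forall t, t \in C -> connect (cartan_rel A T2) s0 t /\ t \in T2.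
    by move=> t; rewrite inE => /andP [].
  have selfC : forall t, t \in T2 -> t \in component A T2 t.
    by move=> t ht; rewrite inE ht connect0.
  have hcompC : forall t, t \in C -> component A T2 t = C.
    by move=> t /hC [hct _]; rewrite /C (comp_eq hsym hct).
  have CN : forall t, t \in C -> t \in N.
    move=> t htC; have [_ htT2] := hC t htC; rewrite inE htT2 andbT.
    by rewrite (hG t s0 htT2 s0T2 (hcompC t htC)).
  have hnullC : forall t, t \in C -> \sum_(s in C) w s * A s t = 0.
    move=> t htC; apply: etrans (hnullN t (CN t htC)).
    rewrite [RHS](bigID (fun s => s \in C)) /= [X in _ = _ + X]big1 ?addr0.
      by apply: eq_bigl => s; case: (boolP (s \in C)) => hs; rewrite ?andbT ?andbF ?CN.
    move=> s /andP [hsN hsC].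
    have [_ htT2] := hC t htC.
    have hsT2 : s \in T2 by move: hsN; rewrite inE => /andP [].
    case: (eqVneq (A s t) 0) => [->|hst]; first by rewrite mulr0.
    by move: hsC; rewrite -(hcompC t htC) -(hconn s t hsT2 htT2 hst) selfC.
  have step : forall s t, s \in C -> t \in C -> 0 < w s -> A s t != 0 -> 0 < w t.
    move=> s t hsC htC hws hst.
    case: (eqVneq s t) => [<- //|hne].
    have h := hnullC t htC.
    rewrite (bigD1 t) //= (hd t : A t t = 2) (bigD1 s) /= in h; last by rewrite hsC.
    have ha : w s * A s t < 0.
      by rewrite pmulr_rlt0 // lt_neqAle hst hoff.
    have hb : \sum_(i | (i \in C) && (i != t) && (i != s)) w i * A i t <= 0.
      apply: sumr_le0 => i /andP [/andP [_ hit] _].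
      by apply: mulr_ge0_le0 => //; apply: hoff.
    move: h ha hb; set P1 := w s * A s t.
    set P2 := \sum_(i | (i \in C) && (i != t) && (i != s)) w i * A i t.
    move=> *; lra.
  have wpos : forall t, t \in C -> 0 < w t.
    suff key : forall p s, s \in C -> 0 < w s -> path (cartan_rel A T2) s p -> 0 < w (last s p).
      move=> t /hC [hct _]; case/connectP: hct => p hp ->.
      by apply: key => //; rewrite /C selfC.
    elim => [|x' p IH] s hsC hws //=.
    case/andP => hsx hpath.
    have hx'C : x' \in C.
      move: hsx; rewrite /cartan_rel => /and3P [hsT2 hxT2 hsx].
      by rewrite -(hcompC s hsC) (hconn s x' hsT2 hxT2 hsx) selfC.
    apply: IH => //.
    move: hsx; rewrite /cartan_rel => /and3P [_ _ hsx].
    exact: step hsx.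
  apply: (hZ s0 s0T2 s0G).
  apply: (zero_type_of hd hoff wpos (s0 := s0)) => //.
  by rewrite /C selfC.
Qed.

End Spec.

Unset Implicit Arguments.

Theorem lemma5p3 (R : realType) (n : nat) (S : finType)
    (alpha v : S -> 'rV[R]_n) (T1 T2 : {set S}) :
  is_coxeter_polytope alpha v ->
  [disjoint T1 & T2] ->
  defines_face alpha (T1 :|: T2) ->
  T1 \subset perp (cartan_of alpha v) T2 ->
  [/\ defines_face alpha (T1 :|: zero_part (cartan_of alpha v) T2),
      defines_face alpha
        (T1 :|: zero_part (cartan_of alpha v) T2 :|: pos_part (cartan_of alpha v) T2)
    & defines_face alpha
        (T1 :|: zero_part (cartan_of alpha v) T2 :|: neg_part (cartan_of alpha v) T2)].
Proof.
move=> hP hdis hF hperp.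
have hsym : forall s t, cartan_of alpha v s t = 0 <-> cartan_of alpha v t s = 0.
  by case: hP => [[_ [_ [h _]]] _ _ _].
set A := cartan_of alpha v in hP hperp hsym *.
have side : forall G : {set S}, zero_part A T2 \subset G ->
    forall s, s \in T2 -> s \notin G -> ~ zero_type (subA A (component A T2 s)).
  move=> G hG s hs hsG hz; move/subsetP: hG => /(_ s); rewrite inE hs /=.
  by move=> /(_ (asboolT hz)); rewrite (negbTE hsG).
have zsub : zero_part A T2 \subset T2 by apply/subsetP => s; rewrite inE => /andP [].
have psub : pos_part A T2 \subset T2 by apply/subsetP => s; rewrite inE => /andP [].
have nsub : neg_part A T2 \subset T2 by apply/subsetP => s; rewrite inE => /andP [].
split.
- have := @main_gen R S n alpha v T1 T2 (zero_part A T2) hP hdis hF hperp.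
  rewrite (setIidPr zsub); apply.
  + by move=> s t hs ht e; rewrite !inE hs ht /= e.
  + exact: side.
- have := @main_gen R S n alpha v T1 T2 (zero_part A T2 :|: pos_part A T2) hP hdis hF hperp.
  rewrite (setIidPr _); last by rewrite subUset zsub psub.
  rewrite setUA; apply.
  + by move=> s t hs ht e; rewrite !inE hs ht /= e.
  + by apply: side; apply: subsetUl.
- have := @main_gen R S n alpha v T1 T2 (zero_part A T2 :|: neg_part A T2) hP hdis hF hperp.
  rewrite (setIidPr _); last by rewrite subUset zsub nsub.
  rewrite setUA; apply.
  + by move=> s t hs ht e; rewrite !inE hs ht /= e.
  + by apply: side; apply: subsetUl.
Qed.
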